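(* For every BI formula $\varphi$, $\varphi\in[\![\varphi]\!]\subseteq[\![\varphi]\!]^{\mathrm{out}}$, where $[\![\varphi]\!]$ is the interpretation of $\varphi$ in the BI algebra $\mathcal C$ with atoms interpreted by $[\![a]\!]=[\![a]\!]^{\mathrm{out}}$, and the leftmost $\varphi$ denotes the single-leaf bunch.
   Context: Formulas of BI: $\varphi,\psi ::= \top \mid \bot \mid \varphi\wedge\psi \mid \varphi\vee\psi \mid \varphi\to\psi \mid \mathsf{emp} \mid \varphi\ast\psi \mid \varphi -\!\!\ast\, \psi \mid a$, $a\in\mathrm{Atom}$. Bunches are finite binary trees whose leaves are formulas or empty bunches $\varnothing_m,\varnothing_a$ and whose internal nodes are labelled by the multiplicative comma ($\Delta_1\mathbin{,}\Delta_2$) or the additive semicolon ($\Delta_1\mathbin{;}\Delta_2$). A bunched context $\Delta(-)$ is a bunch with one leaf replaced by a hole; $\Delta(\Gamma)$ fills it with $\Gamma$. Bunch equivalence $\equiv$ is the least equivalence relation making $\mathbin{,}$ commutative, associative with unit $\varnothing_m$, $\mathbin{;}$ commutative, associative with unit $\varnothing_a$, and closed under contexts; $\mathrm{Bunch}$ is the set of bunches modulo $\equiv$. The cut-free BI sequent calculus ($\Delta\vdash_{\mathsf{cf}}\varphi$) has the rules: (ax) $a\vdash a$ for atoms $a$; (equiv) from $\Delta'\vdash\varphi$, $\Delta\equiv\Delta'$ infer $\Delta\vdash\varphi$; (W;) from $\Delta(\Delta_1)\vdash\varphi$ infer $\Delta(\Delta_1\mathbin{;}\Delta_2)\vdash\varphi$;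 (C;) from $\Delta(\Delta_1\mathbin{;}\Delta_1)\vdash\varphi$ infer $\Delta(\Delta_1)\vdash\varphi$; (empR) $\varnothing_m\vdash\mathsf{emp}$; (empL) from $\Delta(\varnothing_m)\vdash\varphi$ infer $\Delta(\mathsf{emp})\vdash\varphi$; ($\ast$R) from $\Delta_1\vdash\varphi$, $\Delta_2\vdash\psi$ infer $\Delta_1\mathbin{,}\Delta_2\vdash\varphi\ast\psi$; ($\ast$L) from $\Delta(\varphi\mathbin{,}\psi)\vdash\chi$ infer $\Delta(\varphi\ast\psi)\vdash\chi$; ($-\!\ast$R) from $\Delta\mathbin{,}\varphi\vdash\psi$ infer $\Delta\vdash\varphi-\!\!\ast\,\psi$; ($-\!\ast$L) from $\Delta_1\vdash\varphi$, $\Delta(\Delta_2\mathbin{,}\psi)\vdash\chi$ infer $\Delta((\Delta_1\mathbin{,}\Delta_2)\mathbin{,}(\varphi-\!\!\ast\,\psi))\vdash\chi$; ($\top$R) $\varnothing_a\vdash\top$; ($\top$L) from $\Delta(\varnothing_a)\vdash\varphi$ infer $\Delta(\top)\vdash\varphi$; ($\wedge$R) from $\Delta_1\vdash\varphi$, $\Delta_2\vdash\psi$ infer $\Delta_1\mathbin{;}\Delta_2\vdash\varphi\wedge\psi$; ($\wedge$L) from $\Delta(\varphi\mathbin{;}\psi)\vdash\chi$ infer $\Delta(\varphi\wedge\psi)\vdash\chi$; ($\to$R) from $\Delta\mathbin{;}\varphi\vdash\psi$ infer $\Delta\vdash\varphi\to\psi$; ($\to$L) from $\Delta_1\vdash\varphi$,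 $\Delta(\Delta_2\mathbin{;}\psi)\vdash\chi$ infer $\Delta((\Delta_1\mathbin{;}\Delta_2)\mathbin{;}(\varphi\to\psi))\vdash\chi$; ($\bot$L) $\Delta(\bot)\vdash\varphi$; ($\vee$R1/2) from $\Delta\vdash\varphi$ (resp. $\Delta\vdash\psi$) infer $\Delta\vdash\varphi\vee\psi$; ($\vee$L) from $\Delta(\varphi)\vdash\chi$, $\Delta(\psi)\vdash\chi$ infer $\Delta(\varphi\vee\psi)\vdash\chi$. (No cut rule.) For a formula $\varphi$, $[\![\varphi]\!]^{\mathrm{out}}=\{\Delta\in\mathrm{Bunch}\mid\Delta\vdash_{\mathsf{cf}}\varphi\}$. For $X\subseteq\mathrm{Bunch}$, $\mathrm{cl}(X)=\bigcap\{[\![\varphi]\!]^{\mathrm{out}}\mid X\subseteq[\![\varphi]\!]^{\mathrm{out}}\}$, and $\mathcal C=\{X\subseteq\mathrm{Bunch}\mid X=\mathrm{cl}(X)\}$. $\mathcal C$ is a BI algebra (bounded Heyting algebra with a residuated commutative monoid $(\ast,\mathsf{emp},-\!\!\ast)$) with operations: $\mathsf{emp}=\mathrm{cl}(\{\varnothing_m\})$, $\top=\mathrm{Bunch}$, $\bot=\mathrm{cl}(\emptyset)$, $X\vee Y=\mathrm{cl}(X\cup Y)$, $X\wedge Y=X\cap Y$, $X\ast Y=\mathrm{cl}(\{\Delta\mathbin{,}\Delta'\mid\Delta\in X,\Delta'\in Y\})$, $X-\!\!\ast\,Y=\{\Delta\mid\forall\Delta'\in X.\ (\Delta\mathbin{,}\Delta')\in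 Y\}$, $X\to Y=\{\Delta\mid\forall\Delta'\in X.\ (\Delta\mathbin{;}\Delta')\in Y\}$. Formulas are interpreted homomorphically in $\mathcal C$ (each connective by the corresponding operation) given the interpretation of atoms. *)

(* Defs.v *)
Set Implicit Arguments.

Section BI.
Variable Atom : Type.

Inductive formula : Type :=
| FTop | FBot
| FAnd (p q : formula) | FOr (p q : formula) | FImp (p q : formula)
| FEmp | FStar (p q : formula) | FWand (p q : formula)
| FAtom (a : Atom).

Inductive bunch : Type :=
| BForm (p : formula)
| BEmpM
| BEmpA
| BComma (d1 d2 : bunch)
| BSemi (d1 d2 : bunch).

Inductive bctx : Type :=
| Hole
| CCommaL (c : bctx) (d : bunch)
| CCommaR (d : bunch) (c : bctx)
| CSemiL (c : bctx) (d : bunch)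
| CSemiR (d : bunch) (c : bctx).

Fixpoint fill (c : bctx) (g : bunch) : bunch :=
  match c with
  | Hole => g
  | CCommaL c d => BComma (fill c g) d
  | CCommaR d c => BComma d (fill c g)
  | CSemiL c d => BSemi (fill c g) d
  | CSemiR d c => BSemi d (fill c g)
  end.

Inductive beq : bunch -> bunch -> Prop :=
| beq_refl d : beq d d
| beq_sym d e : beq d e -> beq e d
| beq_trans d e f : beq d e -> beq e f -> beq d f
| beq_comma_comm d e : beq (BComma d e) (BComma e d)
| beq_comma_assoc d e f : beq (BComma d (BComma e f)) (BComma (BComma d e) f)
| beq_comma_unit d : beq (BComma d BEmpM) d
| beq_semi_comm d e : beq (BSemi d e) (BSemi e d)
| beq_semi_assoc d e f : beq (BSemi d (BSemi e f)) (BSemi (BSemi d e) f)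
| beq_semi_unit d : beq (BSemi d BEmpA) d
| beq_ctx c d e : beq d e -> beq (fill c d) (fill c e).

Inductive cf : bunch -> formula -> Prop :=
| cf_ax a : cf (BForm (FAtom a)) (FAtom a)
| cf_equiv d d' p : cf d' p -> beq d d' -> cf d p
| cf_W c d1 d2 p : cf (fill c d1) p -> cf (fill c (BSemi d1 d2)) p
| cf_C c d1 p : cf (fill c (BSemi d1 d1)) p -> cf (fill c d1) p
| cf_empR : cf BEmpM FEmp
| cf_empL c p : cf (fill c BEmpM) p -> cf (fill c (BForm FEmp)) p
| cf_starR d1 d2 p q : cf d1 p -> cf d2 q -> cf (BComma d1 d2) (FStar p q)
| cf_starL c p q r :
    cf (fill c (BComma (BForm p) (BForm q))) r -> cf (fill c (BForm (FStar p q))) r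
| cf_wandR d p q : cf (BComma d (BForm p)) q -> cf d (FWand p q)
| cf_wandL c d1 d2 p q r :
    cf d1 p -> cf (fill c (BComma d2 (BForm q))) r ->
    cf (fill c (BComma (BComma d1 d2) (BForm (FWand p q)))) r
| cf_topR : cf BEmpA FTop
| cf_topL c p : cf (fill c BEmpA) p -> cf (fill c (BForm FTop)) p
| cf_andR d1 d2 p q : cf d1 p -> cf d2 q -> cf (BSemi d1 d2) (FAnd p q)
| cf_andL c p q r :
    cf (fill c (BSemi (BForm p) (BForm q))) r -> cf (fill c (BForm (FAnd p q))) r
| cf_impR d p q : cf (BSemi d (BForm p)) q -> cf d (FImp p q)
| cf_impL c d1 d2 p q r :
    cf d1 p -> cf (fill c (BSemi d2 (BForm q))) r ->
    cf (fill c (BSemi (BSemi d1 d2) (BForm (FImp p q)))) r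
| cf_botL c p : cf (fill c (BForm FBot)) p
| cf_orR1 d p q : cf d p -> cf d (FOr p q)
| cf_orR2 d p q : cf d q -> cf d (FOr p q)
| cf_orL c p q r :
    cf (fill c (BForm p)) r -> cf (fill c (BForm q)) r -> cf (fill c (BForm (FOr p q))) r.

(* Subsets of Bunch (bunches modulo ≡) are represented as predicates on raw
   bunches; all sets below are ≡-closed. *)
Definition bset := bunch -> Prop.

Definition out (p : formula) : bset := fun d => cf d p.

Definition cl (X : bset) : bset :=
  fun d => forall p : formula, (forall g, X g -> out p g) -> out p d.

Definition C_emp : bset := cl (fun d => d = BEmpM).
Definition C_top : bset := fun _ => True.
Definition C_bot : bset := cl (fun _ => False).
Definition C_or (X Y : bset) : bset := cl (fun d => X d \/ Y d).
Definition C_and (X Y : bset) : bset := fun d => X d /\ Y d.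
Definition C_star (X Y : bset) : bset :=
  cl (fun d => exists d1 d2, X d1 /\ Y d2 /\ d = BComma d1 d2).
Definition C_wand (X Y : bset) : bset :=
  fun d => forall d', X d' -> Y (BComma d d').
Definition C_imp (X Y : bset) : bset :=
  fun d => forall d', X d' -> Y (BSemi d d').

Fixpoint interp (v : Atom -> bset) (p : formula) : bset :=
  match p with
  | FTop => C_top
  | FBot => C_bot
  | FAnd p q => C_and (interp v p) (interp v q)
  | FOr p q => C_or (interp v p) (interp v q)
  | FImp p q => C_imp (interp v p) (interp v q)
  | FEmp => C_emp
  | FStar p q => C_star (interp v p) (interp v q)
  | FWand p q => C_wand (interp v p) (interp v q)
  | FAtom a => v a
  end.

Definition canon_val (a : Atom) : bset := out (FAtom a).

End BI.

(* Main.v *)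
Require Import Defs.

Section S.
Variable Atom : Type.
Notation formula := (formula Atom).
Notation bunch := (bunch Atom).
Notation bctx := (bctx Atom).
Notation cf := (@cf Atom).

Fixpoint comp (c c' : bctx) : bctx :=
  match c with
  | Hole _ => c'
  | CCommaL c d => CCommaL (comp c c') d
  | CCommaR d c => CCommaR d (comp c c')
  | CSemiL c d => CSemiL (comp c c') d
  | CSemiR d c => CSemiR d (comp c c')
  end.

Lemma fill_comp c c' x : fill (comp c c') x = fill c (fill c' x).
Proof. induction c; simpl; congruence. Qed.

Definition ge (d : bunch) (p : formula) :=
  forall c r, cf (fill c (BForm p)) r -> cf (fill c d) r.

Lemma ge_refl p : ge (BForm p) p.
Proof. intros c r H; exact H. Qed.

Lemma cf_ctx_equiv c x y r : beq x y -> cf (fill c y) r -> cf (fill c x) r.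
Proof. intros E H. eapply cf_equiv. exact H. apply beq_ctx. exact E. Qed.

Lemma main (v := @canon_val Atom) (p : formula) :
  (forall d, ge d p -> interp v p d) /\ (forall d, interp v p d -> out p d).
Proof.
  induction p as [| |p IHp q IHq|p IHp q IHq|p IHp q IHq| |p IHp q IHq|p IHp q IHq|a];
  simpl; split.
  - intros; exact I.
  - intros d _. unfold out.
    pose proof (cf_W (Hole _) (BEmpA _) d (cf_topR _)) as H. simpl in H.
    eapply cf_equiv. exact H.
    apply beq_sym. eapply beq_trans. apply beq_semi_comm. apply beq_semi_unit.
  - intros d G r _. unfold out. apply (G (Hole _)). apply (cf_botL (Hole _)).
  - intros d H. apply H. intros g [].
  - destruct IHp as [Lp Rp], IHq as [Lq Rq].
    intros d G. split.
    + apply Lp. intros c r H. apply G. apply cf_andL. apply cf_W. exact H.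
    + apply Lq. intros c r H. apply G. apply cf_andL.
      eapply cf_ctx_equiv. apply beq_semi_comm. apply cf_W. exact H.
  - destruct IHp as [Lp Rp], IHq as [Lq Rq].
    intros d [H1 H2]. unfold out.
    apply (cf_C (Hole _)). simpl. apply cf_andR; [apply Rp|apply Rq]; assumption.
  - destruct IHp as [Lp Rp], IHq as [Lq Rq].
    intros d G r H. unfold out. apply (G (Hole _)). apply (cf_orL (Hole _)).
    + apply H. left. apply Lp. apply ge_refl.
    + apply H. right. apply Lq. apply ge_refl.
  - destruct IHp as [Lp Rp], IHq as [Lq Rq].
    intros d H. apply H. intros g [Hg|Hg].
    + apply cf_orR1. apply Rp. exact Hg.
    + apply cf_orR2. apply Rq. exact Hg.
  - destruct IHp as [Lp Rp], IHq as [Lq Rq].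
    intros d G d' Hd'. apply Lq. intros c r H.
    pose proof (Rp _ Hd') as Pd'.
    assert (H1 : cf (fill c (BSemi (BSemi d' (BEmpA _)) (BForm (FImp p q)))) r).
    { apply cf_impL. exact Pd'.
      eapply cf_ctx_equiv. 2: exact H.
      eapply beq_trans. apply beq_semi_comm. apply beq_semi_unit. }
    assert (H2 : cf (fill c (BSemi d' (BForm (FImp p q)))) r).
    { eapply cf_ctx_equiv. 2: exact H1.
      apply (beq_ctx (CSemiL (Hole _) _)). apply beq_sym. apply beq_semi_unit. }
    change (BSemi d' (BForm (FImp p q)))
      with (fill (CSemiR d' (Hole _)) (BForm (FImp p q))) in H2.
    rewrite <- fill_comp in H2. apply G in H2.
    rewrite fill_comp in H2. simpl in H2.
    eapply cf_ctx_equiv. 2: exact H2. apply beq_semi_comm.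
  - destruct IHp as [Lp Rp], IHq as [Lq Rq].
    intros d H. unfold out. apply cf_impR. apply Rq. apply H. apply Lp. apply ge_refl.
  - intros d G r H. unfold out. apply (G (Hole _)). apply (cf_empL (Hole _)).
    apply H. reflexivity.
  - intros d H. apply H. intros g ->. apply cf_empR.
  - destruct IHp as [Lp Rp], IHq as [Lq Rq].
    intros d G r H. unfold out. apply (G (Hole _)). apply (cf_starL (Hole _)).
    apply H. exists (BForm p), (BForm q). split; [apply Lp, ge_refl|].
    split; [apply Lq, ge_refl|reflexivity].
  - destruct IHp as [Lp Rp], IHq as [Lq Rq].
    intros d H. apply H. intros g (d1 & d2 & H1 & H2 & ->).
    apply cf_starR; [apply Rp|apply Rq]; assumption.
  - destruct IHp as [Lp Rp], IHq as [Lq Rq].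
    intros d G d' Hd'. apply Lq. intros c r H.
    pose proof (Rp _ Hd') as Pd'.
    assert (H1 : cf (fill c (BComma (BComma d' (BEmpM _)) (BForm (FWand p q)))) r).
    { apply cf_wandL. exact Pd'.
      eapply cf_ctx_equiv. 2: exact H.
      eapply beq_trans. apply beq_comma_comm. apply beq_comma_unit. }
    assert (H2 : cf (fill c (BComma d' (BForm (FWand p q)))) r).
    { eapply cf_ctx_equiv. 2: exact H1.
      apply (beq_ctx (CCommaL (Hole _) _)). apply beq_sym. apply beq_comma_unit. }
    change (BComma d' (BForm (FWand p q)))
      with (fill (CCommaR d' (Hole _)) (BForm (FWand p q))) in H2.
    rewrite <- fill_comp in H2. apply G in H2.
    rewrite fill_comp in H2. simpl in H2.
    eapply cf_ctx_equiv. 2: exact H2. apply beq_comma_comm.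
  - destruct IHp as [Lp Rp], IHq as [Lq Rq].
    intros d H. unfold out. apply cf_wandR. apply Rq. apply H. apply Lp. apply ge_refl.
  - intros d G. unfold v, canon_val, out. apply (G (Hole _)). apply cf_ax.
  - intros d H. exact H.
Qed.
End S.

Theorem lemma6p6 (Atom : Type) (p : formula Atom) :
  interp (@canon_val Atom) p (BForm p) /\
  (forall d : bunch Atom, interp (@canon_val Atom) p d -> out p d).
Proof.
  destruct (@main Atom p) as [L R]. split; [apply L, ge_refl|exact R].
Qed.
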